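(* Let $\mu$ be a joint distribution of a triple $(X,A,Y)$ with $X\in\mathcal{X}\subseteq\mathbb{R}^d$, $A\in\{0,1\}$ with $\Pr(A=0),\Pr(A=1)>0$, and $Y\in[-1,1]$. Let $h:\mathcal{X}\to\mathbb{R}$ be measurable and $\widehat{Y}=h(X)$. If $\widehat{Y}$ is statistically independent of $A$, then $$\varepsilon_{1,\mu_0}(\widehat{Y})+\varepsilon_{1,\mu_1}(\widehat{Y})\geq|\mathbb{E}_{\mu_0}[Y]-\mathbb{E}_{\mu_1}[Y]|$$ and $$\varepsilon^2_{2,\mu_0}(\widehat{Y})+\varepsilon^2_{2,\mu_1}(\widehat{Y})\geq\tfrac{1}{2}|\mathbb{E}_{\mu_0}[Y]-\mathbb{E}_{\mu_1}[Y]|^2.$$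
   Context: For $a\in\{0,1\}$, $\mu_a$ is the conditional distribution of $(X,Y)$ given $A=a$. For a distribution $\nu$ and $p\ge1$, $\varepsilon_{p,\nu}(\widehat{Y}):=\left(\mathbb{E}_\nu[|\widehat{Y}-Y|^p]\right)^{1/p}$. *)

(* Defs.v *)
From HB Require Import structures.
From mathcomp Require Import all_boot all_order all_algebra.
From mathcomp Require Import all_classical all_reals all_analysis.
Set Implicit Arguments. Unset Strict Implicit. Unset Printing Implicit Defensive.
Import Order.TTheory GRing.Theory Num.Theory.
Import numFieldNormedType.Exports.
Local Open Scope classical_set_scope.
Local Open Scope ring_scope.

Notation Rd R d := (g_sigma_algebraType (@open 'rV[R]_d)).

Definition indep_rv {dT d1 d2} {T : measurableType dT} {R : realType}
  {T1 : measurableType d1} {T2 : measurableType d2}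
  (P : probability T R) (f : T -> T1) (g : T -> T2) : Prop :=
  forall (B1 : set T1) (B2 : set T2), measurable B1 -> measurable B2 ->
    P (f @^-1` B1 `&` g @^-1` B2) = (P (f @^-1` B1) * P (g @^-1` B2))%E.

Lemma inv_fine_ge0 {dT} {T : measurableType dT} {R : realType}
  (P : probability T R) (D : set T) : 0 <= (fine (P D))^-1.
Proof. by rewrite invr_ge0 fine_ge0 // measure_ge0. Qed.

Lemma measurable_event {dT} {T : measurableType dT} (A : T -> bool)
  (mA : measurable_fun setT A) (a : bool) : measurable (A @^-1` [set a]).
Proof. by rewrite -[_ @^-1` _]setTI; apply: mA. Qed.

(* mu_a : conditional distribution given A = a, i.e.
   S |-> P(S /\ A = a) / P(A = a) (as a measure on the sample space). *)
Definition cond_dist {dT} {T : measurableType dT} {R : realType}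
  (P : probability T R) (A : T -> bool) (mA : measurable_fun setT A) (a : bool)
  : {measure set T -> \bar R} :=
  mscale (NngNum (inv_fine_ge0 P (A @^-1` [set a])))
         (mrestr P (measurable_event mA a)).

Definition eps_err {dT} {T : measurableType dT} {R : realType}
  (p : R) (nu : {measure set T -> \bar R}) (Yhat Y : T -> R) : \bar R :=
  Lnorm nu p%:E (fun w => (Yhat w - Y w)%:E).

Definition expect {dT} {T : measurableType dT} {R : realType}
  (nu : {measure set T -> \bar R}) (Y : T -> R) : \bar R :=
  (\int[nu]_w (Y w)%:E)%E.

(* Main.v *)
Require Import Defs.
From HB Require Import structures.
From mathcomp Require Import all_boot all_order all_algebra.
From mathcomp Require Import all_classical all_reals all_analysis.
From mathcomp Require Import ring lra measurable_realfun.
Import Order.TTheory GRing.Theory Num.Theory.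
Import numFieldNormedType.Exports.
Local Open Scope classical_set_scope.
Local Open Scope ring_scope.

Definition clamp {R : realType} (x : R) : R := Order.max (-1) (Order.min x 1).

Lemma clamp_le {R : realType} (x y : R) : -1 <= y <= 1 -> `|clamp x - y| <= `|x - y|.
Proof.
move=> /andP[h1 h2]; rewrite /clamp.
have H : forall c : R, -1 <= c <= 1 -> (c - y) * (c - y) <= (x - y) * (x - y) ->
  `|c - y| <= `|x - y|.
  move=> c _ hc; rewrite -ler_sqr ?normr_ge0 // !real_normK ?num_real //.
apply: H.
  rewrite le_max ge_max le_min ge_min lexx /=.
  by rewrite lexx orbT andbT; lra.
case: (leP x 1) => hx; case: (leP (-1) x) => hx'; try nra.
rewrite max_r; [nra | lra].
Qed.

Lemma clamp_bd {R : realType} (x : R) : `|clamp x| <= 1.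
Proof.
rewrite /clamp ler_norml; case: (leP x 1) => hx; case: (leP (-1) x) => hx';
  rewrite ?max_r ?max_l; try (apply/andP; split); lra.
Qed.

Lemma measurable_clamp {R : realType} : measurable_fun setT (@clamp R).
Proof.
have -> : @clamp R = (cst (-1)) \max ((@id R) \min cst 1) by [].
apply: measurable_maxr; first exact: measurable_cst.
apply: measurable_minr => //; exact: measurable_cst.
Qed.

Section key.
Context dT (T : measurableType dT) (R : realType).
Variable mu : {measure set T -> \bar R}.
Hypothesis mu1 : mu setT = 1%E.
Variables (f Y : T -> R).
Hypotheses (mf : measurable_fun setT f) (mY : measurable_fun setT Y)
  (hY : forall w, -1 <= Y w <= 1).

Lemma bdd_integrable (g : T -> R) : measurable_fun setT g ->
  (forall w, `|g w| <= 1) -> mu.-integrable setT (EFin \o g).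
Proof.
move=> mg hg; apply: measurable_bounded_integrable => //.
  by rewrite mu1 ltry.
exists 1; split; rewrite ?num_real // => x Mx y _ /=.
by rewrite (le_trans _ (ltW Mx)).
Qed.

Lemma key1 : (`| \int[mu]_w (clamp (f w))%:E - expect mu Y | <= eps_err 1 mu f Y)%E.
Proof.
rewrite /eps_err Lnorm1 /expect.
have mc : measurable_fun setT (clamp \o f) by apply: measurableT_comp => //; exact: measurable_clamp.
have iZ := @bdd_integrable (clamp \o f) mc (fun w => clamp_bd (f w)).
have iY : mu.-integrable setT (EFin \o Y).
  apply: bdd_integrable => // w; rewrite ler_norml; have := hY w; lra.
rewrite -integralB_EFin //.
apply: (le_trans (le_abse_integral _ _ _)) => //.
  apply/measurable_EFinP; apply: measurable_funB => //.
apply: ge0_le_integral => //.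
- apply: measurableT_comp => //; apply/measurable_EFinP; apply: measurable_funB => //.
- apply: measurableT_comp => //; apply/measurable_EFinP; apply: measurable_funB => //.
- move=> w _ /=; rewrite lee_fin; exact: clamp_le.
Qed.

Lemma key2 : (eps_err 1 mu f Y <= eps_err 2 mu f Y)%E.
Proof.
have := @hoelder _ _ R mu (fun w => f w - Y w) (cst 1) 2 2.
have m1 : measurable_fun setT (fun w => f w - Y w) by apply: measurable_funB.
move=> /(_ m1 (measurable_cst _) (ltr0Sn _ _) (ltr0Sn _ _)).
have -> : (2^-1 + 2^-1 = 1 :> R) by field.
move=> /(_ erefl).
have -> : Lnorm mu 2%:E (EFin \o cst 1) = 1%E.
  rewrite (eq_Lnorm _ _ (g := cst 1%E)) //.
  by rewrite Lnorm_cst1 mu1 poweR1r.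
rewrite mule1 /eps_err.
by under eq_Lnorm do rewrite /= mulr1.
Qed.
End key.

Theorem corollary1 (dT : measure_display) (T : measurableType dT) (R : realType)
  (P : probability T R) (d : nat) (calX : set (Rd R d))
  (X : T -> Rd R d) (A : T -> bool) (Y : T -> R)
  (mX : measurable_fun setT X) (mA : measurable_fun setT A)
  (mY : measurable_fun setT Y)
  (hXin : forall w, calX (X w))
  (hA0 : (0 < P (A @^-1` [set false]))%E) (hA1 : (0 < P (A @^-1` [set true]))%E)
  (hY : forall w, -1 <= Y w <= 1)
  (h : Rd R d -> R) (mh : measurable_fun setT h)
  (hind : indep_rv P (h \o X) A) :
  let mu0 := cond_dist P mA false in
  let mu1 := cond_dist P mA true in
  (eps_err 1 mu0 (h \o X) Y + eps_err 1 mu1 (h \o X) Y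
     >= `| expect mu0 Y - expect mu1 Y |)%E /\
  (eps_err 2 mu0 (h \o X) Y * eps_err 2 mu0 (h \o X) Y
   + eps_err 2 mu1 (h \o X) Y * eps_err 2 mu1 (h \o X) Y
     >= (2^-1)%:E * (`| expect mu0 Y - expect mu1 Y | * `| expect mu0 Y - expect mu1 Y |))%E.
Proof.
move=> mu0 mu1.
have mf : measurable_fun setT (h \o X) by apply: measurableT_comp.
have hmu : forall a, (0 < P (A @^-1` [set a]))%E ->
    cond_dist P mA a setT = 1%E /\
    forall B, measurable B -> cond_dist P mA a ((h \o X) @^-1` B) = P ((h \o X) @^-1` B).
  move=> a pa; rewrite /cond_dist /= /mscale /mrestr /=.
  have pafin : P (A @^-1` [set a]) \is a fin_num.
    by rewrite ge0_fin_numE ?measure_ge0 // (le_lt_trans (probability_le1 _ _)) ?ltry //; exact: measurable_event.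
  have pa0 : fine (P (A @^-1` [set a])) != 0 by rewrite gt_eqF // fine_gt0 // pa /= -ge0_fin_numE // ltW.
  split.

    by rewrite /mrestr setTI -[X in (_ * X)%E](fineK pafin) -EFinM mulVf.
  move=> B mB; rewrite /mrestr hind //.
  rewrite -[X in (_ * (_ * X))%E](fineK pafin) muleC -muleA -EFinM mulfV // mule1.
  done.
have Keq : forall a, (0 < P (A @^-1` [set a]))%E ->
    (\int[cond_dist P mA a]_w (clamp ((h \o X) w))%:E =
     \int[pushforward P (h \o X)]_y (clamp y)%:E)%E.

  move=> a pa; have [m1 mB] := hmu a pa.
  have mc : measurable_fun setT (clamp \o (h \o X)).
    by apply: measurableT_comp => //; exact: measurable_clamp.
  transitivity (\int[pushforward (cond_dist P mA a) (h \o X)]_y (clamp y)%:E)%E.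
    rewrite integral_pushforward //=.
    - by apply/measurable_EFinP; exact: measurable_clamp.
    - rewrite preimage_setT.
      exact: (@bdd_integrable _ _ _ _ m1 _ mc (fun w => clamp_bd _)).
  apply: eq_measure_integral => B mB' _; exact: (mB B mB').
have [m0 _] := hmu false hA0.
have [m1 _] := hmu true hA1.
have k0 := @key1 _ _ _ mu0 m0 (h \o X) Y mf mY hY.
have k1 := @key1 _ _ _ mu1 m1 (h \o X) Y mf mY hY.
have l0 := @key2 _ _ _ mu0 m0 (h \o X) Y mf mY.
have l1 := @key2 _ _ _ mu1 m1 (h \o X) Y mf mY.
have mc : measurable_fun setT (clamp \o (h \o X)).
  by apply: measurableT_comp => //; exact: measurable_clamp.
have bY : forall w, `|Y w| <= 1 by move=> w; rewrite ler_norml; have := hY w; lra.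
have Kfin : (\int[mu0]_w (clamp ((h \o X) w))%:E)%E \is a fin_num.
  exact: integrable_fin_num (@bdd_integrable _ _ _ _ m0 _ mc (fun w => clamp_bd _)).
have E0fin : expect mu0 Y \is a fin_num.
  exact: integrable_fin_num (@bdd_integrable _ _ _ _ m0 _ mY bY).
have E1fin : expect mu1 Y \is a fin_num.
  exact: integrable_fin_num (@bdd_integrable _ _ _ _ m1 _ mY bY).
rewrite (Keq true hA1) -(Keq false hA0) in k1.
move: k0 k1 l0 l1 Kfin E0fin E1fin.
set e10 := eps_err 1 mu0 _ _; set e11 := eps_err 1 mu1 _ _.
set e20 := eps_err 2 mu0 _ _; set e21 := eps_err 2 mu1 _ _.
set K := (\int[mu0]_w _)%E.
set E0 := expect mu0 Y; set E1 := expect mu1 Y.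
move=> k0 k1 l0 l1 Kfin E0fin E1fin.
rewrite -(fineK Kfin) -(fineK E0fin) in k0.
rewrite -(fineK Kfin) -(fineK E1fin) in k1.
rewrite -(fineK E0fin) -(fineK E1fin).
move: k0 k1; rewrite -!EFinB !abse_EFin => k0 k1.
have tri : `|fine E0 - fine E1| <= `|fine K - fine E0| + `|fine K - fine E1|.
  have -> : fine E0 - fine E1 = (fine K - fine E1) - (fine K - fine E0) by ring.
  by rewrite [X in _ <= X]addrC; exact: ler_normB.
split.
  apply: (le_trans _ (leeD k0 k1)); rewrite -EFinD lee_fin; exact: tri.
have p0 : (`|fine K - fine E0|%:E * `|fine K - fine E0|%:E <= e20 * e20)%E.
  by apply: lee_pmul => //; apply: (le_trans k0 l0).
have p1 : (`|fine K - fine E1|%:E * `|fine K - fine E1|%:E <= e21 * e21)%E.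
  by apply: lee_pmul => //; apply: (le_trans k1 l1).
apply: (le_trans _ (leeD p0 p1)).
rewrite -!EFinM -EFinD lee_fin.
move: tri; set D := `|_ - _|; set a0 := `|fine K - fine E0|; set a1 := `|fine K - fine E1|.
have : 0 <= D by exact: normr_ge0.
have : 0 <= a0 by exact: normr_ge0.
have : 0 <= a1 by exact: normr_ge0.
move=> h1 h2 h3 h4.
have : 0 <= (a0 + a1 - D) * (a0 + a1 + D) by apply: mulr_ge0; lra.
have : 0 <= (a0 - a1) * (a0 - a1) by rewrite -expr2 sqr_ge0.
nra.
Qed.
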